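(* Let $SI$, $UI$, $CI$ be a nonnegative bivariate information decomposition. Define the extractable shared information $$\overline{SI}(S;X_1,X_2):=\sup_{f:\mathcal{S}\to\mathcal{S}'} SI(f(S);X_1,X_2),$$ the supremum being over all functions from the alphabet $\mathcal{S}$ of $S$ to an arbitrary finite set $\mathcal{S}'$, and define $$\overline{UI}^*(S;X_1\setminus X_2):=I(S;X_1)-\overline{SI}(S;X_1,X_2),\quad \overline{UI}^*(S;X_2\setminus X_1):=I(S;X_2)-\overline{SI}(S;X_1,X_2),$$ $$\overline{CI}^*(S;X_1,X_2):=I(S;X_1X_2)-\overline{SI}(S;X_1,X_2)-\overline{UI}^*(S;X_1\setminus X_2)-\overline{UI}^*(S;X_2\setminus X_1).$$ Then $\overline{SI}$, $\overline{UI}^*(S;X_1\setminus X_2)$, $\overline{UI}^*(S;X_2\setminus X_1)$ and $\overline{CI}^*$ are nonnegative, and moreover: (a) $\overline{SI}(S;X_1,X_2)\ge SI(S;X_1,X_2)$; (b) $\overline{CI}^*(S;X_1,X_2)\ge CI(S;X_1,X_2)$; (c) if $f^*$ is a function achieving the supremum in the definition of $\overline{SI}(S;X_1,X_2)$, then $UI(f^*(S);X_1\setminus X_2)\le \overline{UI}^*(S;X_1\setminus X_2)\le UI(S;X_1\setminus X_2)$.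
   Context: All random variables have finite alphabets. A nonnegative bivariate information decomposition consists of nonnegative functions $SI(S;X_1,X_2)$, $UI(S;X_1\setminus X_2)$, $UI(S;X_2\setminus X_1)$, $CI(S;X_1,X_2)$, defined for every joint distribution of $(S,X_1,X_2)$ with arbitrary finite alphabets and depending continuously on it, such that $I(S;X_1X_2)=SI(S;X_1,X_2)+CI(S;X_1,X_2)+UI(S;X_1\setminus X_2)+UI(S;X_2\setminus X_1)$, $I(S;X_1)=SI(S;X_1,X_2)+UI(S;X_1\setminus X_2)$ and $I(S;X_2)=SI(S;X_1,X_2)+UI(S;X_2\setminus X_1)$, where $I$ denotes mutual information and $I(S;X_1X_2)$ is the mutual information between $S$ and the pair $(X_1,X_2)$. *)

(* Defs.v *)
From HB Require Import structures.
From mathcomp Require Import all_boot all_order all_algebra.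
From mathcomp Require Import boolp classical_sets reals exp.
Set Implicit Arguments. Unset Strict Implicit. Unset Printing Implicit Defensive.
Import Order.TTheory GRing.Theory Num.Theory.
Local Open Scope ring_scope.

Section InfoDefs.
Variable R : realType.

Definition is_dist (T : finType) (p : T -> R) : Prop :=
  (forall t, 0 <= p t) /\ \sum_(t : T) p t = 1.

(* mutual information I(A;B) of a joint pmf q on A * B (natural log,
   convention 0 log 0 = 0) *)
Definition MI (A B : finType) (q : A * B -> R) : R :=
  \sum_(ab : A * B)
     (if q ab == 0 then 0
      else q ab * ln (q ab / ((\sum_(b : B) q (ab.1, b)) *
                               (\sum_(a : A) q (a, ab.2))))).

Definition pS1 (S X1 X2 : finType) (p : S * X1 * X2 -> R) : S * X1 -> R :=
  fun sx => \sum_(x2 : X2) p (sx.1, sx.2, x2).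
Definition pS2 (S X1 X2 : finType) (p : S * X1 * X2 -> R) : S * X2 -> R :=
  fun sx => \sum_(x1 : X1) p (sx.1, x1, sx.2).
Definition pS12 (S X1 X2 : finType) (p : S * X1 * X2 -> R) : S * (X1 * X2) -> R :=
  fun sx => p (sx.1, sx.2.1, sx.2.2).

Definition I_S1 (S X1 X2 : finType) (p : S * X1 * X2 -> R) := MI (pS1 p).
Definition I_S2 (S X1 X2 : finType) (p : S * X1 * X2 -> R) := MI (pS2 p).
Definition I_S12 (S X1 X2 : finType) (p : S * X1 * X2 -> R) := MI (pS12 p).

Definition push (S S' X1 X2 : finType) (f : S -> S') (p : S * X1 * X2 -> R)
  : S' * X1 * X2 -> R :=
  fun t => \sum_(s : S | f s == t.1.1) p (s, t.1.2, t.2).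

Definition functional := forall S X1 X2 : finType, (S * X1 * X2 -> R) -> R.

Definition cont_on_dists (F : functional) : Prop :=
  forall (S X1 X2 : finType) (p : S * X1 * X2 -> R), is_dist p ->
  forall eps : R, 0 < eps -> exists2 delta : R, 0 < delta &
    forall q : S * X1 * X2 -> R, is_dist q ->
      (forall t, `|q t - p t| < delta) -> `|F S X1 X2 q - F S X1 X2 p| < eps.

Record nonneg_decomp (SI UI1 UI2 CI : functional) : Prop := {
  nd_ge0 : forall (S X1 X2 : finType) (p : S * X1 * X2 -> R), is_dist p ->
     [/\ 0 <= SI _ _ _ p, 0 <= UI1 _ _ _ p, 0 <= UI2 _ _ _ p & 0 <= CI _ _ _ p];
  nd_I12 : forall (S X1 X2 : finType) (p : S * X1 * X2 -> R), is_dist p ->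
     I_S12 p = SI _ _ _ p + CI _ _ _ p + UI1 _ _ _ p + UI2 _ _ _ p;
  nd_I1 : forall (S X1 X2 : finType) (p : S * X1 * X2 -> R), is_dist p ->
     I_S1 p = SI _ _ _ p + UI1 _ _ _ p;
  nd_I2 : forall (S X1 X2 : finType) (p : S * X1 * X2 -> R), is_dist p ->
     I_S2 p = SI _ _ _ p + UI2 _ _ _ p;
  nd_cont : [/\ cont_on_dists SI, cont_on_dists UI1, cont_on_dists UI2
              & cont_on_dists CI]
}.

Definition SIbar (SI : functional) (S X1 X2 : finType) (p : S * X1 * X2 -> R) : R :=
  sup [set r : R | exists (S' : finType) (f : S -> S'), r = SI _ _ _ (push f p)].

Definition UIbar1 (SI : functional) (S X1 X2 : finType) (p : S * X1 * X2 -> R) : R :=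
  I_S1 p - SIbar SI p.
Definition UIbar2 (SI : functional) (S X1 X2 : finType) (p : S * X1 * X2 -> R) : R :=
  I_S2 p - SIbar SI p.
Definition CIbar (SI : functional) (S X1 X2 : finType) (p : S * X1 * X2 -> R) : R :=
  I_S12 p - SIbar SI p - UIbar1 SI p - UIbar2 SI p.

End InfoDefs.

(* Main.v *)
Require Import Defs.
From HB Require Import structures.
From mathcomp Require Import all_boot all_order all_algebra.
From mathcomp Require Import boolp classical_sets reals exp.
From mathcomp Require Import ring lra.
Import Order.TTheory GRing.Theory Num.Theory.
Local Open Scope ring_scope.

Section Aux.
Variable R : realType.

Lemma ln_le_sub1 (x : R) : 0 < x -> ln x <= x - 1.
Proof.
move=> x0; have := expR_ge1Dx (ln x); rewrite lnK ?posrE //; lra.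
Qed.

Lemma le_sum_one {I : finType} {P : pred I} (F : I -> R) i :
  (forall j, 0 <= F j) -> P i -> F i <= \sum_(j | P j) F j.
Proof.
move=> F0 Pi; rewrite (bigD1 i) //= lerDl; exact: sumr_ge0.
Qed.

Lemma sum_fiber {I J : finType} (g : I -> J) (G : I -> R) :
  \sum_(j : J) \sum_(i | g i == j) G i = \sum_i G i.
Proof.
by rewrite [RHS](partition_big g xpredT) //.
Qed.

Lemma key (q qA qB q' q'A : R) : 0 < q -> 0 < qA -> 0 < qB -> 0 < q' -> 0 < q'A ->
  q - qA * q' / q'A <= q * ln (q / (qA * qB)) - q * ln (q' / (q'A * qB)).
Proof.
move=> h1 h2 h3 h4 h5.
have a0 : 0 < q / (qA * qB) by rewrite divr_gt0 ?mulr_gt0.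
have b0 : 0 < q' / (q'A * qB) by rewrite divr_gt0 ?mulr_gt0.
have H := ln_le_sub1 _ (divr_gt0 b0 a0).
rewrite ln_div ?posrE // in H.
have E : q' / (q'A * qB) / (q / (qA * qB)) = qA * q' / q'A / q.
  field; rewrite ?gt_eqF //.
rewrite E in H.
have : q * (ln (q' / (q'A * qB)) - ln (q / (qA * qB))) <= q * (qA * q' / q'A / q - 1).
  by rewrite ler_pM2l.
have -> : q * (qA * q' / q'A / q - 1) = qA * q' / q'A - q.
  field; rewrite ?gt_eqF //.
lra.
Qed.

Lemma MI_alt (A B : finType) (q : A * B -> R) :
  MI q = \sum_(ab : A * B) q ab * ln (q ab / ((\sum_(b : B) q (ab.1, b)) *
                               (\sum_(a : A) q (a, ab.2)))).
Proof.
apply: eq_bigr => ab _; case: eqP => [->|//]; by rewrite mul0r.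
Qed.

Section DPI.
Variables (A A' B : finType) (f : A -> A') (q : A * B -> R).
Hypothesis q0 : forall t, 0 <= q t.

Let qA a := \sum_(b : B) q (a, b).
Let qB b := \sum_(a : A) q (a, b).
Let q' (t : A' * B) := \sum_(a | f a == t.1) q (a, t.2).
Let q'A a' := \sum_(b : B) q' (a', b).

Lemma q'B b : \sum_(a' : A') q' (a', b) = qB b.
Proof. rewrite /q' /qB /=; exact: (sum_fiber f (fun a => q (a, b))). Qed.

Lemma sum_pair (F : A * B -> R) : \sum_(ab : A * B) F ab = \sum_a \sum_b F (a, b).
Proof. by rewrite pair_big /=; apply: eq_bigr => -[]. Qed.

Lemma sum_pair' (F : A' * B -> R) : \sum_(ab : A' * B) F ab = \sum_a \sum_b F (a, b).
Proof. by rewrite pair_big /=; apply: eq_bigr => -[]. Qed.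

Lemma MIq' : MI q' = \sum_(ab : A * B) q ab *
   ln (q' (f ab.1, ab.2) / (q'A (f ab.1) * qB ab.2)).
Proof.
rewrite MI_alt sum_pair' sum_pair.
rewrite -(sum_fiber f (fun a => \sum_b q (a, b) *
   ln (q' (f a, b) / (q'A (f a) * qB b)))).
apply: eq_bigr => a' _.
rewrite exchange_big /=; apply: eq_bigr => b _.
rewrite q'B /q' /= mulr_suml; apply: eq_bigr => a /eqP -> //.
Qed.

Lemma dpi : MI q' <= MI q.
Proof.
rewrite -subr_ge0 MI_alt MIq' -sumrB.
have qAq'A a : qA a <= q'A (f a).
  apply: ler_sum => b _; rewrite /q' /=.
  by apply: (le_sum_one (fun a0 => q (a0, b))).
apply: (@le_trans _ _ (\sum_(ab : A * B) (q ab - qA ab.1 * q' (f ab.1, ab.2) / q'A (f ab.1)))).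
  rewrite sumrB subr_ge0.
  have E1 : \sum_(ab : A * B) q ab = \sum_a qA a by rewrite sum_pair.
  have E2 : \sum_(ab : A * B) qA ab.1 * q' (f ab.1, ab.2) / q'A (f ab.1)
     = \sum_a qA a * (q'A (f a) / q'A (f a)).
    rewrite sum_pair; apply: eq_bigr => a _ /=.
    rewrite mulrA; set c := (q'A (f a))^-1.
    by rewrite /q'A mulr_sumr mulr_suml.
  rewrite E1 E2.
  apply: ler_sum => a _.
  have [->|nz] := eqVneq (q'A (f a)) 0.
    rewrite mul0r mulr0; apply: sumr_ge0 => b _; exact: q0.
  by rewrite divff // mulr1.
apply: ler_sum => -[a b] _ /=.
have [q0'|qpos] := eqVneq (q (a, b)) 0.
  rewrite q0' !mul0r subrr sub0r oppr_le0.
  apply: divr_ge0; first apply: mulr_ge0; try apply: sumr_ge0 => *; try apply: sumr_ge0 => *; exact: q0.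
have qp : 0 < q (a, b) by rewrite lt0r qpos q0.
have hA : 0 < qA a by apply: (lt_le_trans qp); exact: (le_sum_one (fun b0 => q (a, b0))).
have hB : 0 < qB b by apply: (lt_le_trans qp); exact: (le_sum_one (fun a0 => q (a0, b))).
have hq' : 0 < q' (f a, b).
  apply: (lt_le_trans qp); exact: (le_sum_one (fun a0 => q (a0, b))).
have hq'A : 0 < q'A (f a) by apply: (lt_le_trans hA).
exact: key.
Qed.
End DPI.

Lemma sum2 (A B : finType) (F : A * B -> R) :
  \sum_(t : A * B) F t = \sum_a \sum_b F (a, b).
Proof. by rewrite [RHS]pair_big /=; apply: eq_bigr => -[]. Qed.

Lemma sum3 (A B C : finType) (F : A * B * C -> R) :
  \sum_(t : A * B * C) F t = \sum_a \sum_b \sum_c F (a, b, c).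
Proof.
rewrite sum2 sum2; apply: eq_bigr => a _; apply: eq_bigr => b _.
by [].
Qed.

Section Push.
Variables (S S' X1 X2 : finType) (f : S -> S') (p : S * X1 * X2 -> R).
Hypothesis Hp : is_dist p.

Lemma push_dist : is_dist (push f p).
Proof.
case: Hp => p0 p1; split.
  by move=> t; apply: sumr_ge0 => s _; exact: p0.
rewrite sum3 /push /=.
transitivity (\sum_(s' : S') \sum_(s | f s == s') \sum_x1 \sum_x2 p (s, x1, x2)).
  apply: eq_bigr => s' _.
  under eq_bigr => x1 _ do rewrite exchange_big.
  by rewrite exchange_big.
by rewrite sum_fiber -p1 sum3.
Qed.

Lemma pS1_push : pS1 (push f p) = (fun t => \sum_(s | f s == t.1) pS1 p (s, t.2)).
Proof.
apply: funext => t; rewrite /pS1 /push /=; exact: exchange_big.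
Qed.

Lemma pS2_push : pS2 (push f p) = (fun t => \sum_(s | f s == t.1) pS2 p (s, t.2)).
Proof.
apply: funext => t; rewrite /pS2 /push /=; exact: exchange_big.
Qed.

Lemma I1_push : I_S1 (push f p) <= I_S1 p.
Proof.
rewrite /I_S1 pS1_push; apply: dpi => t.
by apply: sumr_ge0 => x _; case: Hp.
Qed.

Lemma I2_push : I_S2 (push f p) <= I_S2 p.
Proof.
rewrite /I_S2 pS2_push; apply: dpi => t.
by apply: sumr_ge0 => x _; case: Hp.
Qed.
End Push.

Lemma push_id (S X1 X2 : finType) (p : S * X1 * X2 -> R) :
  push (fun s : S => s) p = p.
Proof.
apply: funext => -[[s x1] x2]; rewrite /push /=.
exact: big_pred1_eq.
Qed.

End Aux.
Arguments push_dist {R S S' X1 X2} f {p}.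
Arguments I1_push {R S S' X1 X2} f {p}.
Arguments I2_push {R S S' X1 X2} f {p}.
Arguments push_id {R S X1 X2} p.

Local Open Scope classical_set_scope.

Theorem lemma2 (R : realType) (SI UI1 UI2 CI : functional R)
  (HD : nonneg_decomp SI UI1 UI2 CI)
  (S X1 X2 : finType) (p : S * X1 * X2 -> R) (Hp : is_dist p) :
  [/\ 0 <= SIbar SI p, 0 <= UIbar1 SI p, 0 <= UIbar2 SI p, 0 <= CIbar SI p &
   [/\ SI _ _ _ p <= SIbar SI p,
       CI _ _ _ p <= CIbar SI p &
       forall (S' : finType) (f : S -> S'),
         SI _ _ _ (push f p) = SIbar SI p ->
         UI1 _ _ _ (push f p) <= UIbar1 SI p /\ UIbar1 SI p <= UI1 _ _ _ p]].
Proof.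
have ub : forall (S' : finType) (f : S -> S'),
    SI _ _ _ (push f p) <= I_S1 p /\ SI _ _ _ (push f p) <= I_S2 p.
  move=> S' f; have Hq := push_dist f Hp.
  have [_ u1 u2 _] := nd_ge0 HD Hq.
  have e1 := nd_I1 HD Hq; have e2 := nd_I2 HD Hq.
  have d1 := I1_push f Hp; have d2 := I2_push f Hp.
  split; lra.
set E := [set r : R | exists (S' : finType) (f : S -> S'), r = SI _ _ _ (push f p)].
have inE : E (SI _ _ _ p) by exists S, (fun s => s); rewrite push_id.
have E0 : E !=set0 by exists (SI _ _ _ p).
have hs : has_sup E.
  split => //; exists (I_S1 p) => r [S' [f ->]]; exact: (ub S' f).1.
have Mge : SI _ _ _ p <= SIbar SI p by exact: sup_upper_bound hs _ inE.
have Mle1 : SIbar SI p <= I_S1 p.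
  by apply: ge_sup => // r [S' [f ->]]; exact: (ub S' f).1.
have Mle2 : SIbar SI p <= I_S2 p.
  by apply: ge_sup => // r [S' [f ->]]; exact: (ub S' f).2.
have [s0 u10 u20 c0] := nd_ge0 HD Hp.
have e12 := nd_I12 HD Hp; have e1 := nd_I1 HD Hp; have e2 := nd_I2 HD Hp.
rewrite /UIbar1 /UIbar2 /CIbar /UIbar1 /UIbar2.
split; try lra; split; try lra.
move=> S' f Hf.
have Hq := push_dist f Hp.
have [_ u1 _ _] := nd_ge0 HD Hq.
have e1' := nd_I1 HD Hq; have d1 := I1_push f Hp.
split; lra.
Qed.
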